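(* Let $c>0$ and $\alpha,\beta\in\mathbb{R}$. For all $x\ge c$, $$\int_c^x\frac{dy}{y^{\alpha}(x+c-y)^{\beta}}=\Big\{\frac{1}{c(x+c)}\Big\}^{\alpha+\beta-1}\int_c^x (y+c)^{\alpha+\beta-2}\Big(\frac{c^{\alpha}}{y^{\alpha}}+\frac{c^{\beta}}{y^{\beta}}\Big)dy.$$ *)

(* Defs.v *)
From Stdlib Require Import Reals.
From Coquelicot Require Import Coquelicot.

(* Main.v *)
Require Import Defs.
From Stdlib Require Import Reals Lra.
From Coquelicot Require Import Coquelicot.
Open Scope R_scope.
Lemma pointwise (c a b x t : R) : 0 < c -> c <= x -> 0 < t ->
  c * (x + c) / ((t + c) * (t + c)) *
  (/ (Rpower (c * (x + c) / (t + c)) a * Rpower (x + c - c * (x + c) / (t + c)) b) +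
   / (Rpower (c * (x + c) / (t + c)) b * Rpower (x + c - c * (x + c) / (t + c)) a)) =
  Rpower (/ (c * (x + c))) (a + b - 1) *
  (Rpower (t + c) (a + b - 2) * (Rpower c a / Rpower t a + Rpower c b / Rpower t b)).
Proof.
intros hc hx ht.
assert (hX : 0 < x + c) by lra. assert (hT : 0 < t + c) by lra.
assert (E1 : forall k, Rpower (c * (x + c) / (t + c)) k = exp (k * (ln c + ln (x+c) - ln (t+c)))).
{ intro k. unfold Rpower. rewrite ln_div, ln_mult; auto. apply Rmult_lt_0_compat; auto. }
assert (E2 : forall k, Rpower (x + c - c * (x + c) / (t + c)) k = exp (k * (ln (x+c) + ln t - ln (t+c)))).
{ intro k. replace (x + c - c * (x + c) / (t + c)) with ((x+c)*t/(t+c)) by (field; lra).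
  unfold Rpower. rewrite ln_div, ln_mult; auto. apply Rmult_lt_0_compat; auto. }
assert (E3 : c * (x + c) / ((t + c) * (t + c)) = exp (ln c + ln (x+c) + - (ln (t+c) + ln (t+c)))).
{ rewrite !exp_plus, exp_Ropp, exp_plus, !exp_ln; auto. }
assert (E4 : Rpower (/ (c * (x + c))) (a + b - 1) = exp ((a+b-1) * (-(ln c + ln (x+c))))).
{ unfold Rpower. rewrite ln_Rinv, ln_mult; auto. apply Rmult_lt_0_compat; auto. }
rewrite E1, E2, E3, E4, E1, E2. unfold Rpower, Rdiv.
repeat (rewrite <- exp_plus || rewrite <- exp_Ropp).
rewrite !Rmult_plus_distr_l.
repeat (rewrite <- exp_plus).
rewrite Rplus_comm. f_equal; f_equal; ring.
Qed.
Lemma contF (s a b y : R) : 0 < y -> 0 < s - y ->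
  continuous (fun y => / (Rpower y a * Rpower (s - y) b)) y.
Proof.
intros h1 h2. apply (@ex_derive_continuous R_AbsRing R_NormedModule). unfold Rpower. auto_derive.
repeat split; try lra; apply Rgt_not_eq; try apply Rmult_lt_0_compat; apply exp_pos.
Qed.
Lemma contH (c a b t : R) : 0 < c -> 0 < t ->
  continuous (fun y => Rpower (y + c) (a + b - 2) *
                 (Rpower c a / Rpower y a + Rpower c b / Rpower y b)) t.
Proof.
intros h1 h2. apply (@ex_derive_continuous R_AbsRing R_NormedModule). unfold Rpower. auto_derive.
repeat split; try lra; apply Rgt_not_eq; try apply Rmult_lt_0_compat; apply exp_pos.
Qed.

Theorem lemmaA1 (c alpha beta x : R) (hc : 0 < c) (hx : c <= x) :
  RInt (fun y => / (Rpower y alpha * Rpower (x + c - y) beta)) c x =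
  Rpower (/ (c * (x + c))) (alpha + beta - 1) *
  RInt (fun y => Rpower (y + c) (alpha + beta - 2) *
                 (Rpower c alpha / Rpower y alpha + Rpower c beta / Rpower y beta)) c x.
Proof.
set (F := fun y => / (Rpower y alpha * Rpower (x + c - y) beta)).
set (G := fun y => / (Rpower y beta * Rpower (x + c - y) alpha)).
set (H := fun y => Rpower (y + c) (alpha + beta - 2) *
                 (Rpower c alpha / Rpower y alpha + Rpower c beta / Rpower y beta)).
set (K := Rpower (/ (c * (x + c))) (alpha + beta - 1)).
set (m := (x + c) / 2).
set (g := fun t => c * (x + c) / (t + c)).
set (dg := fun t => - (c * (x + c) / ((t + c) * (t + c)))).
assert (cF : forall y, c <= y <= x -> continuous F y).
{ intros y hy. apply contF; lra. }
assert (cG : forall y, c <= y <= x -> continuous G y).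
{ intros y hy. apply contF; lra. }
assert (exF : forall a b, c <= a <= x -> c <= b <= x -> ex_RInt F a b).
{ intros a b ha hb. apply (@ex_RInt_continuous R_CompleteNormedModule). intros z hz. apply cF.
  split; [apply Rle_trans with (Rmin a b) | apply Rle_trans with (Rmax a b)]; try tauto;
  unfold Rmin, Rmax; destruct Rle_dec; lra. }
assert (exG : forall a b, c <= a <= x -> c <= b <= x -> ex_RInt G a b).
{ intros a b ha hb. apply (@ex_RInt_continuous R_CompleteNormedModule). intros z hz. apply cG.
  split; [apply Rle_trans with (Rmin a b) | apply Rle_trans with (Rmax a b)]; try tauto;
  unfold Rmin, Rmax; destruct Rle_dec; lra. }
assert (hm : c <= m <= x) by (unfold m; lra).
assert (hc' : c <= c <= x) by lra. assert (hx' : c <= x <= x) by lra.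
rewrite <- (RInt_Chasles F c m x) by auto.
assert (R1 : RInt F m x = RInt G c m).
{ assert (L := RInt_comp_lin F (-1) (x + c) c m).
  replace (-1 * c + (x + c)) with x in L by ring.
  replace (-1 * m + (x + c)) with m in L by (unfold m; field).
  specialize (L (exF _ _ hx' hm)).
  rewrite <- opp_RInt_swap by auto. rewrite <- L.
  rewrite (RInt_ext _ (fun y => opp (G y))).
  2:{ intros y _. unfold G, F. unfold scal, opp; simpl; unfold mult; simpl. replace (x + c - (-1 * y + (x + c))) with y by ring. replace (-1 * y + (x + c)) with (x + c - y) by ring. rewrite (Rmult_comm (Rpower (x + c - y) alpha)). ring. }
  transitivity (opp (opp (RInt G c m))). { apply (f_equal opp). exact (RInt_opp G c m (exG _ _ hc' hm)). } unfold opp; simpl. ring. }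
rewrite R1.
change (plus (RInt F c m) (RInt G c m) = K * RInt H c x).
rewrite <- RInt_plus by auto.
assert (P1 : forall t, Rmin c x <= t <= Rmax c x -> continuous (fun y => plus (F y) (G y)) (g t)).
{ intros t ht. unfold Rmin, Rmax in ht; destruct Rle_dec in ht; try lra.
  assert (0 < t + c) by lra.
  assert (g t <= m).
  { assert (m - g t = (x+c)*(t-c) / (2*(t+c))) by (unfold m, g; field; lra).
    assert (0 <= (x+c)*(t-c) / (2*(t+c))).
    { apply Rmult_le_pos. apply Rmult_le_pos; lra. left; apply Rinv_0_lt_compat; lra. }
    lra. }
  assert (c <= g t).
  { assert (g t - c = c*(x-t) / (t+c)) by (unfold g; field; lra).
    assert (0 <= c*(x-t) / (t+c)).
    { apply Rmult_le_pos. apply Rmult_le_pos; lra. left; apply Rinv_0_lt_compat; lra. }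
    lra. }
  apply (@continuous_plus R_UniformSpace R_AbsRing R_NormedModule).
  + apply cF. lra.
  + apply cG. lra. }
assert (P2 : forall t, Rmin c x <= t <= Rmax c x -> is_derive g t (dg t) /\ continuous dg t).
{ intros t ht. unfold Rmin, Rmax in ht; destruct Rle_dec in ht; try lra.
  assert (0 < (t+c)*(t+c)) by (apply Rmult_lt_0_compat; lra). split.
  + unfold g, dg. auto_derive. lra. field. lra.
  + apply (@ex_derive_continuous R_AbsRing R_NormedModule). unfold dg. auto_derive. repeat split; lra. }
assert (C := RInt_comp (fun y => plus (F y) (G y)) g dg c x P1 P2).
replace (g c) with m in C by (unfold g, m; field; lra).
replace (g x) with c in C by (unfold g; field; lra).
assert (exFG : ex_RInt (fun y => plus (F y) (G y)) m c).
{ apply (@ex_RInt_plus R_CompleteNormedModule); auto. }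
transitivity (opp (RInt (fun y => plus (F y) (G y)) m c)).
{ symmetry. exact (opp_RInt_swap _ m c exFG). }
rewrite <- C.
assert (exH : ex_RInt H c x).
{ apply (@ex_RInt_continuous R_CompleteNormedModule). intros z hz. apply contH; auto.
  unfold Rmin in hz; destruct Rle_dec in hz; lra. }
transitivity (RInt (fun t => scal K (H t)) c x).
2:{ exact (RInt_scal H c x K exH). }
assert (Q : forall t, Rmin c x < t < Rmax c x ->
   opp (scal K (H t)) = scal (dg t) (plus (F (g t)) (G (g t)))).
{ intros t ht. unfold Rmin, Rmax in ht; destruct Rle_dec in ht; try lra.
  unfold scal, opp, plus; simpl. unfold mult; simpl.
  unfold F, G, H, K, dg, g. rewrite <- pointwise by lra. ring. }
assert (exC : ex_RInt (fun y => scal (dg y) (plus (F (g y)) (G (g y)))) c x).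
{ apply (@ex_RInt_ext R_NormedModule (fun t => opp (scal K (H t)))); auto.
  apply (@ex_RInt_opp R_NormedModule (fun t => scal K (H t))).
  apply (@ex_RInt_scal R_NormedModule). exact exH. }
transitivity (RInt (fun y => opp (scal (dg y) (plus (F (g y)) (G (g y))))) c x).
{ symmetry. exact (RInt_opp _ c x exC). }
apply RInt_ext. intros t ht. unfold Rmin, Rmax in ht; destruct Rle_dec in ht; try lra.
unfold scal, opp, plus; simpl. unfold mult; simpl.
unfold F, G, H, K, dg, g. rewrite <- pointwise by lra. ring.
Qed.
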